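(* Let $H=\operatorname{diag}(\lambda_1,\dots,\lambda_n)$ with $\lambda_1\ge\dots\ge\lambda_{n-p}\ge0>\lambda_{n-p+1}\ge\dots\ge\lambda_n$ for some $1\le p<n$, let $L=\max(\lambda_1,-\lambda_n)$ and $0<\alpha<1/L$. Let $(\gamma_k)_{k\ge1}$, $(\beta_k)_{k\ge1}$ be sequences in $[0,1]$ with $\gamma_{k+1}\ge\gamma_k$ and $\beta_{k+1}\ge\beta_k$ for all $k$, and let $\bar\gamma=\lim_{k\to\infty}\gamma_k$, $\bar\beta=\lim_{k\to\infty}\beta_k$. For $i$ with $\lambda_i<0$ define $b_{i,0}=0$ and, for $k\ge1$, \[ b_{i,k}=(\beta_k+\gamma_k\alpha|\lambda_i|)\Big(1-\frac{1}{1+b_{i,k-1}}\Big)+\alpha|\lambda_i|. \] Then for all $i$ with $\lambda_i<0$, $\lim_{k\to\infty}b_{i,k}=\bar b_i$, where \[ \bar b_i=\tfrac12\big(\bar\beta-1+\alpha|\lambda_i|(1+\bar\gamma)\big)+\tfrac12\sqrt{\big(\bar\beta-1+\alpha|\lambda_i|(1+\bar\gamma)\big)^2+4\alpha|\lambda_i|}. \]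
   Context: The quantities $b_{i,k}$ describe the per-iteration growth factors $x_i^{k+1}=x_i^0\prod_{m=0}^k(1+b_{i,m})$ of the components along negative-curvature directions for the accelerated gradient iteration $y^k=x^k+\gamma_k(x^k-x^{k-1})$, $x^{k+1}=x^k+\beta_k(x^k-x^{k-1})-\alpha Hy^k$, $x^0=x^1$, applied to $f(x)=\frac12x^THx$. *)

(* Defs.v *)
From HB Require Import structures.
From mathcomp Require Import all_boot all_order all_algebra.
From mathcomp Require Import all_classical all_reals all_analysis.
Set Implicit Arguments. Unset Strict Implicit. Unset Printing Implicit Defensive.
Import Order.TTheory GRing.Theory Num.Theory.
Local Open Scope ring_scope.

Fixpoint bgrowth (R : realType) (alpha lam : R) (beta gamma : nat -> R) (k : nat) : R :=
  match k with
  | 0 => 0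
  | k'.+1 => (beta k'.+1 + gamma k'.+1 * alpha * `|lam|)
               * (1 - 1 / (1 + bgrowth alpha lam beta gamma k'))
             + alpha * `|lam|
  end.

(* Main.v *)
Require Import Defs.
From HB Require Import structures.
From mathcomp Require Import all_boot all_order all_algebra.
From mathcomp Require Import all_classical all_reals all_analysis.
From mathcomp Require Import ring lra.
Import Order.TTheory GRing.Theory Num.Theory.
Import numFieldNormedType.Exports.
Local Open Scope classical_set_scope.
Local Open Scope ring_scope.

Lemma mono_cvg_ex (R : realType) (u : R^nat) (M : R) :
  (forall n, u n <= u n.+1) -> (forall n, u n <= M) -> exists l : R, u @ \oo --> l.
Proof.
move=> hu hM; exists (sup (range u)); apply: nondecreasing_cvgn.
  by apply/nondecreasing_seqP.
by exists M => _ [n _ <-].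
Qed.

Lemma shift_lim (R : realType) (u : R^nat) :
  (forall n, (1 <= n)%N -> u n <= u n.+1) -> (forall n, (1 <= n)%N -> u n <= 1) ->
  u @ \oo --> limn u.
Proof.
move=> hu hM.
have [l hl] := @mono_cvg_ex R (fun n => u n.+1) 1 (fun n => hu n.+1 isT) (fun n => hM n.+1 isT).
have hl' : u @ \oo --> l by rewrite -cvg_shiftS.
by rewrite (cvg_lim _ hl').
Qed.

Theorem theorem4p2 (R : realType) (n p : nat) (lambda : nat -> R)
  (alpha : R) (beta gamma : nat -> R) :
  (1 <= p < n)%N ->
  (forall i j : nat, (1 <= i)%N -> (i <= j)%N -> (j <= n)%N -> lambda j <= lambda i) ->
  (forall i : nat, (1 <= i)%N -> (i <= n - p)%N -> 0 <= lambda i) ->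
  (forall i : nat, (n - p < i)%N -> (i <= n)%N -> lambda i < 0) ->
  0 < alpha -> alpha < 1 / Num.max (lambda 1%N) (- lambda n) ->
  (forall k : nat, (1 <= k)%N -> 0 <= gamma k <= 1) ->
  (forall k : nat, (1 <= k)%N -> 0 <= beta k <= 1) ->
  (forall k : nat, (1 <= k)%N -> gamma k <= gamma k.+1) ->
  (forall k : nat, (1 <= k)%N -> beta k <= beta k.+1) ->
  let gbar := limn gamma in
  let bbar := limn beta in
  forall i : nat, (1 <= i)%N -> (i <= n)%N -> lambda i < 0 ->
    let c := bbar - 1 + alpha * `|lambda i| * (1 + gbar) in
    bgrowth alpha (lambda i) beta gamma @ \oo -->
      c / 2 + Num.sqrt (c ^+ 2 + 4 * alpha * `|lambda i|) / 2.
Proof.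
move=> _ _ _ _ ha _ hg hb hgm hbm gbar bbar i _ _ hli c.
have cg : gamma @ \oo --> gbar by apply: shift_lim => // k /hg /andP[].
have cb : beta @ \oo --> bbar by apply: shift_lim => // k /hb /andP[].
set a := alpha * `|lambda i|.
have cE : c = bbar - 1 + a * (1 + gbar) by rewrite /c /a.
clearbody c.
have a0 : 0 < a by rewrite mulr_gt0 // normr_gt0 lt_eqF.
set b := bgrowth alpha (lambda i) beta gamma.
pose h (x : R) := x / (1 + x).
have fr x : 0 <= x -> 1 - 1 / (1 + x) = h x.
  by move=> x0; rewrite /h; field; rewrite gt_eqF // ltr_pwDl.
have h0 x : 0 <= x -> 0 <= h x.
  by move=> x0; rewrite /h divr_ge0 // addr_ge0.
have h1 x : 0 <= x -> h x <= 1.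
  by move=> x0; rewrite /h ler_pdivrMr ?mul1r ?lerDr // ltr_pwDl.
have hm x y : 0 <= x -> x <= y -> h x <= h y.
  move=> x0 xy; have y0 : 0 <= y by apply: le_trans xy.
  rewrite /h ler_pdivrMr ?ltr_pwDl // mulrAC ler_pdivlMr ?ltr_pwDl //.
  nra.
pose cS k := beta k.+1 + gamma k.+1 * a.
have cS0 k : 0 <= cS k.
  have /andP[? _] := hb k.+1 isT; have /andP[? _] := hg k.+1 isT.
  by rewrite /cS addr_ge0 // mulr_ge0 // ltW.
have cS1 k : cS k <= 1 + a.
  have /andP[_ ?] := hb k.+1 isT; have /andP[? ?] := hg k.+1 isT.
  rewrite /cS; nra.
have cSm k : cS k <= cS k.+1.
  rewrite /cS; apply: lerD; first exact: hbm.
  apply: ler_wpM2r; [exact: ltW | exact: hgm].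
have bS' k : b k.+1 = cS k * (1 - 1 / (1 + b k)) + a.
  by rewrite /b /= /cS /a mulrA.
have bge k : 0 <= b k.
  case: k => [|k]; first by rewrite /b.
  elim: k => [|k IH]; first by rewrite bS' /b /= addr0 divr1 subrr mulr0 add0r ltW.
  rewrite bS' fr //; apply: addr_ge0; last exact: ltW.
  by apply: mulr_ge0; [exact: cS0 | exact: h0].
have bS k : b k.+1 = cS k * h (b k) + a by rewrite bS' fr.
have bm k : b k <= b k.+1.
  elim: k => [|k IH]; first by rewrite bS /b /= /h mul0r mulr0 add0r ltW.
  rewrite (bS k.+1) (bS k) lerD2r; apply: ler_pM; rewrite ?h0 ?cS0 //.
  by rewrite -bS; apply: hm (bge k) IH.
have bM k : b k <= 1 + 2 * a.
  case: k => [|k]; first by rewrite /b /=; lra.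
  rewrite bS; have := cS1 k; have := h1 _ (bge k); have := h0 _ (bge k).
  have := cS0 k; nra.
have bnd : nondecreasing_seq b by apply/nondecreasing_seqP.
have [l bl] := @mono_cvg_ex R b (1 + 2 * a) bm bM.
have ll : limn b = l by exact: cvg_lim.
have la : a <= l.
  rewrite -ll; have := nondecreasing_cvgn_le bnd (cvgP _ bl) 1.
  by rewrite bS /b /= /h mul0r mulr0 add0r.
have bl1 : (fun k => b k.+1) @ \oo --> l by rewrite cvg_shiftS.
have cb1 : (fun k => beta k.+1) @ \oo --> bbar by rewrite cvg_shiftS.
have cg1 : (fun k => gamma k.+1) @ \oo --> gbar by rewrite cvg_shiftS.
have cc : cS @ \oo --> bbar + gbar * a.
  apply: cvgD => //; apply: cvgM => //; exact: cvg_cst.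
have l1 : 1 + l != 0 by rewrite gt_eqF // ltr_pwDl //; lra.
have hc : (fun k => h (b k)) @ \oo --> l / (1 + l).
  apply: cvgM => //; apply: cvgV => //; apply: cvgD => //; exact: cvg_cst.
have bl2 : (fun k => b k.+1) @ \oo --> (bbar + gbar * a) * (l / (1 + l)) + a.
  have -> : (fun k => b k.+1) = (fun k => cS k * h (b k) + a).
    by apply/funext => k; rewrite bS.
  apply: cvgD; last exact: cvg_cst.
  exact: cvgM.
have eq : l = (bbar + gbar * a) * (l / (1 + l)) + a.
  exact: (cvg_unique _ bl1 bl2).
have q : l ^+ 2 - c * l - a = 0.
  have e2 : l * (1 + l) = (bbar + gbar * a) * l + a * (1 + l).
    by rewrite {1}eq; field.
  have -> : l ^+ 2 - c * l - a = l * (1 + l) - ((bbar + gbar * a) * l + a * (1 + l)).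
    by rewrite cE; ring.
  by rewrite e2 subrr.
have pos : 0 <= 2 * l - c.
  have : l * (l - c) = a by nra.
  nra.
have -> : c / 2 + Num.sqrt (c ^+ 2 + 4 * alpha * `|lambda i|) / 2 = l.
  have -> : c ^+ 2 + 4 * alpha * `|lambda i| = (2 * l - c) ^+ 2.
    rewrite -/a -mulrA -/a; nra.
  rewrite sqrtr_sqr ger0_norm //; field.
  by [].
exact: bl.
Qed.
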